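(* Let $T=(V,E,\gamma,\mathrm{p})$ be a fault tree, run Algorithm $\mathtt{SFPA}$ on $T$, and for $v\in V$ let $g_{v,\infty}$ denote the final value of $g_v$ (i.e. $\mathrm{p}(v)$ if $v$ is a basic event, and otherwise the value of $g_v$ after the substitution loop at $v$ has finished). Let $\mathcal I_v=\{w\in V\mid w\prec v\prec\mathrm{id}(w)\}$. Then $g_{v,\infty}=\langle U(T_v[\mathcal I_v])\rangle$.
   Context: A fault tree (FT) is a tuple $T=(V,E,\gamma,\mathrm{p})$ where $(V,E)$ is a rooted directed acyclic graph (edges point from a node to its children; root $R_T$), $\gamma\colon V\to\{\mathtt{OR},\mathtt{AND},\mathtt{BE}\}$ with $\gamma(v)=\mathtt{BE}$ iff $v$ is a leaf, and $\mathrm{p}\colon\mathrm{BE}(T)\to[0,1]$. A partially controllable fault tree (PCFT) is defined the same way except that $\gamma$ may also take the value $\mathtt{CBE}$ (leaves have label $\mathtt{BE}$ or $\mathtt{CBE}$), and $\mathrm{p}$ is defined on $\mathrm{BE}(T)=\{v\mid\gamma(v)=\mathtt{BE}\}$; let $\mathrm{CBE}(T)=\{v\mid\gamma(v)=\mathtt{CBE}\}$. The structure function $S_T(v,\vec f,\vec c)$ ($\vec f\in\{0,1\}^{\mathrm{BE}(T)}$, $\vec c\in\{0,1\}^{\mathrm{CBE}(T)}$) is $f_v$ on $\mathtt{BE}$, $c_v$ on $\mathtt{CBE}$, disjunction over children on $\mathtt{OR}$, conjunction over children on $\mathtt{AND}$. With $\vec F$ having independent coordinates, $\mathbb P(F_v=1)=\mathrm{p}(v)$,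 the unreliability is $U(T)\colon\{0,1\}^{\mathrm{CBE}(T)}\to[0,1]$, $U(T)(\vec c)=\mathbb P(S_T(R_T,\vec F,\vec c)=1)$. Constructions: $T_v$ is the FT consisting of all descendants of $v$ (including $v$) with root $v$ and inherited structure. For $I\subseteq V$, $T[I]$ is the PCFT obtained by setting $\gamma(w)=\mathtt{CBE}$ and removing all outgoing edges for each $w\in I$, and then keeping only the nodes reachable from the root. Order and dominators: $x\preceq y$ iff there is a directed path (possibly of length $0$) from $y$ to $x$; $x\prec y$ iff $x\preceq y$, $x\neq y$. $w$ dominates $v$ if $v\prec w$ and every path from $R_T$ to $v$ contains $w$. For $v\neq R_T$, $\mathrm{id}(v)$ is the unique dominator of $v$ with $\mathrm{id}(v)\preceq w'$ for all dominators $w'$ of $v$. Squarefree polynomial algebra: $\mathcal A(X)$ for finite $X$ consists of formal sums $\sum_{Y\subseteq X}\alpha_Y\prod_{x\in Y}\mathsf F_x$ with polynomial arithmetic subject to $\mathsf F_x^2=\mathsf F_x$; $\mathcal A(X)\subseteq\mathcal A(X')$ for $X\subseteq X'$. For $x\in X\setminus Y$, $\alpha\in\mathcal A(X)$, $\beta\in\mathcal A(Y)$, the substitution $\alpha[\mathsf F_x\mapsto\beta]=\beta\cdot\sum_{Z\ni x}\alpha_Z\prod_{x'\in Z\setminus\{x\}}\mathsf F_{x'}+\sum_{Z\not\ni x}\alpha_Z\prod_{x'\in Z}\mathsf F_{x'}$. For $g\colon\{0,1\}^X\to\mathbb R$, $\langle g\rangle$ is the unique element of $\mathcal A(X)$ with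 $g(\vec c)=\langle g\rangle[\forall x\colon\mathsf F_x\mapsto c_x]$ for all $\vec c$. Algorithm $\mathtt{SFPA}(T)$: set $\mathsf{ToDo}\leftarrow V$. While $\mathsf{ToDo}\neq\varnothing$: pick $v\in\mathsf{ToDo}$ minimal w.r.t. $\preceq$ and remove it. If $\gamma(v)=\mathtt{BE}$, set $g_v\leftarrow\mathrm{p}(v)$. Otherwise set $g_v\leftarrow 1-\prod_{w\in\mathrm{ch}(v)}(1-\mathsf F_w)$ if $\gamma(v)=\mathtt{OR}$, and $g_v\leftarrow\prod_{w\in\mathrm{ch}(v)}\mathsf F_w$ if $\gamma(v)=\mathtt{AND}$ ($\mathrm{ch}(v)$ = children of $v$); then set $\mathsf{ToDo}_v\leftarrow\{w\in V\mid\mathrm{id}(w)=v\}$ and, while $\mathsf{ToDo}_v\neq\varnothing$, pick $w\in\mathsf{ToDo}_v$ maximal w.r.t. $\preceq$, remove it, and set $g_v\leftarrow g_v[\mathsf F_w\mapsto g_w]$. Return $g_{R_T}$. *)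

(* Defs.v *)
From HB Require Import structures.
From mathcomp Require Import all_boot all_order all_algebra.
From mathcomp Require Import reals.
Set Implicit Arguments.
Unset Strict Implicit.
Unset Printing Implicit Defensive.
Import Order.TTheory GRing.Theory Num.Theory.
Local Open Scope ring_scope.

Inductive gate := OR | AND | BE.
Definition gate_eqb (a b : gate) : bool :=
  match a, b with OR, OR | AND, AND | BE, BE => true | _, _ => false end.
Lemma gate_eqP : Equality.axiom gate_eqb.
Proof. by case; case; constructor. Qed.
HB.instance Definition _ := hasDecEq.Build gate gate_eqP.

Section FT.
Variables (R : realType) (V : finType) (E : rel V) (r : V)
          (gamma : V -> gate) (p : V -> R).

(* E x y : y is a child of x.  x ⪯ y iff a directed path from y to x. *)
Definition preceq (x y : V) : bool := connect E y x.
Definition prec (x y : V) : bool := (x != y) && connect E y x.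

Definition is_FT : Prop :=
  (forall x y, E x y -> ~~ connect E y x)
  /\ (forall u, connect E r u)
  /\ (forall u, (gamma u == BE) = [forall w, ~~ E u w])
  /\ (forall u, gamma u = BE -> 0 <= p u <= 1).

Definition dominates (w u : V) : Prop :=
  prec u w /\ forall q : seq V, path E r q -> last r q = u -> w \in r :: q.

Definition is_idom (u d : V) : Prop :=
  u != r /\ dominates d u /\ forall d', dominates d' u -> preceq d d'.

Definition calI (v w : V) : Prop :=
  exists d, is_idom w d /\ prec w v /\ prec v d.

(* alpha Y = coefficient of the monomial prod_{x in Y} F_x *)
Definition sfpoly := {ffun {set V} -> R}.
Definition mono (Y : {set V}) : sfpoly := [ffun Z => (Z == Y)%:R].
Definition constA (a : R) : sfpoly := [ffun Z => if Z == set0 then a else 0].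
Definition oneA : sfpoly := constA 1.
Definition addA (a b : sfpoly) : sfpoly := [ffun Z => a Z + b Z].
Definition subA (a b : sfpoly) : sfpoly := [ffun Z => a Z - b Z].
(* polynomial multiplication subject to F_x^2 = F_x *)
Definition mulA (a b : sfpoly) : sfpoly :=
  [ffun Z => \sum_(Y1 : {set V}) \sum_(Y2 : {set V} | Y1 :|: Y2 == Z) a Y1 * b Y2].
Definition inA (X : {set V}) (a : sfpoly) : Prop :=
  forall Y, a Y != 0 -> Y \subset X.
(* alpha[forall x : F_x |-> c_x], with c the indicator of C *)
Definition evalA (a : sfpoly) (C : {set V}) : R :=
  \sum_(Y : {set V}) a Y * (Y \subset C)%:R.
(* alpha[F_x |-> beta] *)
Definition substA (a : sfpoly) (x : V) (b : sfpoly) : sfpoly :=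
  addA (mulA b [ffun W => \sum_(Z : {set V} | x \in Z) a Z * mono (Z :\ x) W])
       [ffun W => \sum_(Z : {set V} | x \notin Z) a Z * mono Z W].

Definition init_poly (v : V) : sfpoly :=
  match gamma v with
  | OR => subA oneA (\big[mulA/oneA]_(w | E v w) subA oneA (mono [set w]))
  | AND => \big[mulA/oneA]_(w | E v w) mono [set w]
  | BE => constA (p v)
  end.

(* s v = the order in which the inner loop at v picks elements of ToDo_v *)
Definition SFPA_step (s : V -> seq V) (g : V -> sfpoly) (v : V) : V -> sfpoly :=
  let nv := if gamma v == BE then constA (p v)
            else foldl (fun acc w => substA acc w (g w)) (init_poly v) (s v) in
  fun u => if u == v then nv else g u.

(* ord = the order in which the outer loop picks vertices;
   the result maps each v to g_{v,infty} *)
Definition SFPA_run (ord : seq V) (s : V -> seq V) : V -> sfpoly :=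
  foldl (SFPA_step s) (fun _ => 0) ord.

(* ord is a legal outer-loop order: every vertex exactly once, each picked
   vertex minimal w.r.t. ⪯ among those still in ToDo *)
Definition valid_outer (ord : seq V) : Prop :=
  uniq ord /\ (forall u, u \in ord) /\
  forall a b v, ord = a ++ v :: b -> forall u, u \in b -> ~~ prec u v.

(* sv is a legal inner-loop order at v: ToDo_v = {w | id(w) = v}, each
   picked w maximal w.r.t. ⪯ among those still in ToDo_v *)
Definition valid_inner (v : V) (sv : seq V) : Prop :=
  uniq sv /\ (forall w, w \in sv <-> is_idom w v) /\
  forall a b w, sv = a ++ w :: b -> forall u, u \in b -> ~~ prec w u.

(* nodes of T_v[I]: reachable from v without leaving a node of I *)
Definition reachI (I : {set V}) (v u : V) : bool :=
  connect (fun a b => (a \notin I) && E a b) v u.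
Definition BEset (I : {set V}) (v : V) : {set V} :=
  [set u | reachI I v u && (u \notin I) && (gamma u == BE)].
Definition CBEset (I : {set V}) (v : V) : {set V} :=
  [set u | reachI I v u && (u \in I)].

(* structure function of T[I] (f = failed BEs, C = controlled CBEs set to 1),
   unfolded to depth n; depth #|V| exceeds the length of every path *)
Fixpoint Sfun (I C f : {set V}) (n : nat) (u : V) : bool :=
  match n with
  | 0 => false
  | n'.+1 =>
    if u \in I then u \in C else
    match gamma u with
    | BE => u \in f
    | OR => [exists w, E u w && Sfun I C f n' w]
    | AND => [forall w, E u w ==> Sfun I C f n' w]
    end
  end.
Definition S_T (I C f : {set V}) (u : V) : bool := Sfun I C f #|V| u.

(* U(T_v[I])(c) = P(S(v, F, c) = 1), F independent Bernoulli(p b) on BE(T_v[I]) *)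
Definition unrel (I : {set V}) (v : V) (C : {set V}) : R :=
  \sum_(f : {set V} | f \subset BEset I v)
     (\prod_(b in f) p b) * (\prod_(b in BEset I v :\: f) (1 - p b))
     * (S_T I C f v)%:R.

End FT.

(* Main.v *)
From Pilot Require Import Defs.
From HB Require Import structures.
From mathcomp Require Import all_boot all_order all_algebra.
From mathcomp Require Import reals.
From mathcomp Require Import ring.
From Stdlib Require Import ClassicalEpsilon.
Import Pilot.Defs.
Set Implicit Arguments. Unset Strict Implicit. Unset Printing Implicit Defensive.
Import GRing.Theory Num.Theory.


Section Poly.
Local Open Scope ring_scope.
Variables (R : realType) (V : finType).
Implicit Types (a b : sfpoly R V) (C X Y Z W : {set V}).

Lemma evalA_mono Y C : evalA (mono R Y) C = (Y \subset C)%:R.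
Proof.
rewrite /evalA (bigD1 Y) //= big1 ?addr0.
  by rewrite ffunE eqxx mul1r.
by move=> Z HZ; rewrite ffunE (negbTE HZ) mul0r.
Qed.

Lemma evalA_summono (P : pred {set V}) (c : {set V} -> R) (g : {set V} -> {set V}) C :
  evalA [ffun W => \sum_(Z | P Z) c Z * mono R (g Z) W] C
  = \sum_(Z | P Z) c Z * (g Z \subset C)%:R.
Proof.
rewrite /evalA.
under eq_bigr do rewrite ffunE mulr_suml.
rewrite exchange_big /=; apply: eq_bigr => Z _.
rewrite -(evalA_mono (g Z) C) /evalA mulr_sumr; apply: eq_bigr => W _.
by rewrite mulrA.
Qed.

Lemma evalA_mul a b C : evalA (Defs.mulA a b) C = evalA a C * evalA b C.
Proof.
rewrite /evalA /Defs.mulA.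
transitivity (\sum_(Y1 : {set V}) \sum_(Y2 : {set V})
                 a Y1 * b Y2 * ((Y1 :|: Y2) \subset C)%:R).
  under eq_bigr do rewrite ffunE mulr_suml.
  rewrite exchange_big /=; apply: eq_bigr => Y1 _.
  under eq_bigr do rewrite mulr_suml.
  rewrite (exchange_big_dep xpredT) //=; apply: eq_bigr => Y2 _.
  by rewrite (big_pred1 (Y1 :|: Y2)) // => Z /=; rewrite eq_sym.
rewrite mulr_suml; apply: eq_bigr => Y1 _; rewrite mulr_sumr; apply: eq_bigr => Y2 _.
rewrite subUset.
by case: (Y1 \subset C); case: (Y2 \subset C); rewrite /= ?mulr1 ?mulr0 ?mul0r.
Qed.

Lemma evalA_add a b C : evalA (addA a b) C = evalA a C + evalA b C.
Proof. by rewrite /evalA -big_split; apply: eq_bigr => Y _; rewrite ffunE mulrDl. Qed.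

Lemma evalA_sub a b C : evalA (subA a b) C = evalA a C - evalA b C.
Proof. by rewrite /evalA -sumrB; apply: eq_bigr => Y _; rewrite ffunE mulrBl. Qed.

Lemma evalA_const (c : R) C : evalA (constA V c) C = c.
Proof.
rewrite /evalA (bigD1 set0) //= big1 ?addr0.
  by rewrite ffunE eqxx sub0set mulr1.
by move=> Z HZ; rewrite ffunE (negbTE HZ) mul0r.
Qed.

Lemma evalA_one C : evalA (oneA R V) C = 1.
Proof. exact: evalA_const. Qed.

Lemma evalA_subst a x b C :
  evalA (substA a x b) C =
  evalA b C * (evalA a (x |: C) - evalA a (C :\ x)) + evalA a (C :\ x).
Proof.
rewrite /substA evalA_add evalA_mul !evalA_summono.
have H2 : \sum_(Z : {set V} | x \notin Z) a Z * (Z \subset C)%:R = evalA a (C :\ x).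
  rewrite /evalA [RHS](bigID (fun Z => x \in Z)) /= [X in _ = X + _]big1 ?add0r; last first.
    by move=> Z HZ; rewrite subsetD1 HZ andbF mulr0.
  by apply: eq_bigr => Z HZ; rewrite subsetD1 HZ andbT.
have H1 : evalA a (x |: C) =
   \sum_(Z : {set V} | x \in Z) a Z * (Z :\ x \subset C)%:R + evalA a (C :\ x).
  rewrite -H2 /evalA [LHS](bigID (fun Z => x \in Z)) /=; congr (_ + _).
    by apply: eq_bigr => Z HZ; rewrite subDset.
  apply: eq_bigr => Z HZ; congr (_ * _%:R).
  rewrite -subDset (_ : Z :\: [set x] = Z) //.
  by apply/setP => y; rewrite !inE; case: eqP => // ->; rewrite (negbTE HZ).
by rewrite H1 H2 addrK.
Qed.

Lemma inAP X a : inA X a <-> forall Y, ~~ (Y \subset X) -> a Y = 0.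
Proof.
split=> H Y.
  by move=> HY; apply/eqP; exact: (contraNT (H Y) HY).
by move=> HY; apply/negPn/negP => HnY; move: HY; rewrite H ?eqxx.
Qed.

Lemma inA_mono X X' a : X \subset X' -> inA X a -> inA X' a.
Proof. by move=> HX H Y /H HY; exact: subset_trans HY HX. Qed.

Lemma inA_mul X Y a b : inA X a -> inA Y b -> inA (X :|: Y) (Defs.mulA a b).
Proof.
rewrite !inAP => Ha Hb Z HZ; rewrite ffunE big1 // => Y1 _; rewrite big1 // => Y2 /eqP HU.
have : ~~ (Y1 \subset X) || ~~ (Y2 \subset Y).
  move: HZ; rewrite -HU; apply: contraR; rewrite negb_or !negbK => /andP[H1 H2].
  exact: setUSS.
by case/orP => [/Ha -> | /Hb ->]; rewrite ?mul0r ?mulr0.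
Qed.

Lemma inA_add X a b : inA X a -> inA X b -> inA X (addA a b).
Proof. by rewrite !inAP => Ha Hb Y HY; rewrite ffunE Ha ?Hb ?addr0. Qed.

Lemma inA_subA X a b : inA X a -> inA X b -> inA X (subA a b).
Proof. by rewrite !inAP => Ha Hb Y HY; rewrite ffunE Ha ?Hb ?subr0. Qed.

Lemma inA_const X (c : R) : inA X (constA V c).
Proof.
rewrite inAP => Y HY; rewrite ffunE; case: eqP => // E0.
by move: HY; rewrite E0 sub0set.
Qed.

Lemma inA_summono X (P : pred {set V}) (c : {set V} -> R) (g : {set V} -> {set V}) :
  (forall Z, P Z -> c Z != 0 -> g Z \subset X) ->
  inA X [ffun W => \sum_(Z | P Z) c Z * mono R (g Z) W].
Proof.
move=> H; rewrite inAP => W HW; rewrite ffunE big1 // => Z HZ; rewrite ffunE.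
case: eqP => [EZ|_]; last by rewrite mulr0.
case: (eqVneq (c Z) 0) => [->|/(H Z HZ)]; first by rewrite mul0r.
by move=> HgZ; move: HW; rewrite EZ HgZ.
Qed.

Lemma inA_subst X Y a x b : inA X a -> inA Y b -> inA ((X :\ x) :|: Y) (substA a x b).
Proof.
move=> Ha Hb; apply: inA_add.
  rewrite setUC; apply: inA_mul => //; apply: inA_summono => Z _ /Ha HZ.
  exact: setSD.
apply: inA_mono (subsetUl _ _) _; apply: inA_summono => Z HZ /Ha HZX.
by rewrite subsetD1 HZX.
Qed.

Lemma inA_subst0 X a x b : inA X a -> x \notin X -> inA (X :\ x) (substA a x b).
Proof.
move=> Ha Hx.
have H0 : forall W, [ffun W => \sum_(Z : {set V} | x \in Z) a Z * mono R (Z :\ x) W] W = 0.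
  move=> W; rewrite ffunE big1 // => Z HZ.
  move/inAP: Ha => ->; first by rewrite mul0r.
  by apply/negP => /subsetP /(_ x HZ); rewrite (negbTE Hx).
rewrite /substA inAP => W HW; rewrite ffunE.
rewrite [X in X + _]ffunE big1 ?add0r; last first.
  by move=> Y1 _; rewrite big1 // => Y2 _; rewrite H0 mulr0.
rewrite ffunE big1 // => Z HZ; rewrite ffunE.
case: eqP => [EZ|_]; last by rewrite mulr0.
move/inAP: Ha => ->; first by rewrite mul0r.
by apply: contra HW; rewrite EZ subsetD1 HZ andbT.
Qed.

End Poly.


Section Prob.
Local Open Scope ring_scope.
Variables (R : realType) (V : finType) (p : V -> R).
Implicit Types (B : {set V}) (h : {set V} -> R).

Definition Ex B h : R :=
  \sum_(f : {set V} | f \subset B)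
     (\prod_(b in f) p b) * (\prod_(b in B :\: f) (1 - p b)) * h f.

Definition local B h := forall f, h f = h (f :&: B).

Lemma eq_Ex B h1 h2 : h1 =1 h2 -> Ex B h1 = Ex B h2.
Proof. by move=> H; apply: eq_bigr => f _; rewrite H. Qed.

Lemma Ex_add B h1 h2 : Ex B (fun f => h1 f + h2 f) = Ex B h1 + Ex B h2.
Proof. by rewrite /Ex -big_split; apply: eq_bigr => f _; rewrite mulrDr. Qed.

Lemma Ex_sub B h1 h2 : Ex B (fun f => h1 f - h2 f) = Ex B h1 - Ex B h2.
Proof. by rewrite /Ex -sumrB; apply: eq_bigr => f _; rewrite mulrBr. Qed.

Lemma Ex_set1 b h : Ex [set b] h = p b * h [set b] + (1 - p b) * h set0.
Proof.
have Hn : set0 != [set b] by apply/eqP => /setP /(_ b); rewrite !inE eqxx.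
rewrite /Ex (bigD1 [set b]) ?subxx //= (bigD1 set0) /=; last by rewrite sub0set.
rewrite [X in _ + (_ + X)]big1 ?addr0; last first.
  move=> f /andP[/andP[H1 H2] H3]; move: H1; rewrite subset1 => /orP[]/eqP E0.
    by rewrite E0 eqxx in H2.
  by rewrite E0 eqxx in H3.
rewrite big_set1 setDv setD0 !big_set0 big_set1.
by rewrite !mulr1 mul1r.
Qed.

Lemma Ex_set0 h : Ex set0 h = h set0.
Proof.
rewrite /Ex (big_pred1 set0); last by move=> f; rewrite /= subset0.
by rewrite setD0 !big_set0 !mul1r.
Qed.

Lemma disjP B1 B2 : [disjoint B1 & B2] -> forall x, x \in B1 -> x \notin B2.
Proof. by rewrite -setI_eq0 => /eqP/setP H x H1; move: (H x); rewrite !inE H1 /= => ->. Qed.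

Lemma disjI B1 B2 : (forall x, x \in B1 -> x \in B2 -> False) -> [disjoint B1 & B2].
Proof.
move=> H; rewrite -setI_eq0; apply/eqP/setP => x; rewrite !inE.
by apply/negP => /andP[h1 h2]; exact: H h1 h2.
Qed.

Lemma Ex_indep B1 B2 h1 h2 : [disjoint B1 & B2] -> local B1 h1 -> local B2 h2 ->
  Ex (B1 :|: B2) (fun f => h1 f * h2 f) = Ex B1 h1 * Ex B2 h2.
Proof.
move=> dis l1 l2; have D := disjP dis.
rewrite /Ex; symmetry; rewrite mulr_suml.
under eq_bigr do rewrite mulr_sumr.
rewrite pair_big /=.
rewrite (reindex_onto (fun f => (f :&: B1, f :&: B2)) (fun x => x.1 :|: x.2)) /=; last first.
  move=> [f1 f2] /= /andP[s1 s2].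
  have N2 : forall x, x \in f2 -> x \in B1 = false.
    by move=> x H; apply/negbTE/negP => HB1; move: (D x HB1); rewrite (subsetP s2 x H).
  have N1 : forall x, x \in f1 -> x \in B2 = false.
    by move=> x H; apply/negbTE; exact: D (subsetP s1 x H).
  congr (_, _); apply/setP => x; rewrite !inE.
    case H3: (x \in f1); first by rewrite (subsetP s1 x H3).
    by case H4: (x \in f2); rewrite //= N2.
  case H4: (x \in f2); first by rewrite orbT (subsetP s2 x H4).
  by case H3: (x \in f1); rewrite //= N1.
apply: eq_big => [f|f].
  rewrite !subsetIr /= -setIUr; apply/idP/idP; first by move/eqP <-; rewrite subsetIr.
  by move=> Hf; apply/eqP/setIidPl.
move=> /andP[_ /eqP Hf].
rewrite [h1 f]l1 [h2 f]l2.
have E1 : \prod_(b in f) p b = \prod_(b in f :&: B1) p b * \prod_(b in f :&: B2) p b.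
  rewrite -bigU /=; last first.
    apply/disjI => x; rewrite !inE => /andP[_ H1] /andP[_ H2].
    by move: (D _ H1); rewrite H2.
  apply: eq_bigl => x; rewrite /= !inE.
  by move/setP: Hf => /(_ x); rewrite !inE => ->.
have E2 : \prod_(b in (B1 :|: B2) :\: f) (1 - p b) =
   \prod_(b in B1 :\: (f :&: B1)) (1 - p b) * \prod_(b in B2 :\: (f :&: B2)) (1 - p b).
  rewrite -bigU /=; last first.
    apply/disjI => x; rewrite !inE => /andP[_ H1] /andP[_ H2].
    by move: (D _ H1); rewrite H2.
  by apply: eq_bigl => x; rewrite /= !inE; case: (x \in f); case: (x \in B1); case: (x \in B2).
rewrite /= E1 E2; ring.
Qed.

Lemma Ex_one B : Ex B (fun _ => 1) = 1.
Proof.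
move: {2}#|B| (leqnn #|B|) => n; elim: n B => [|n IH] B HB.
  move: HB; rewrite leqn0 cards_eq0 => /eqP ->; exact: Ex_set0.
case: (set_0Vmem B) => [->|[b Hb]]; first exact: Ex_set0.
rewrite -(setD1K Hb).
have H := @Ex_indep [set b] (B :\ b) (fun _ => 1) (fun _ => 1).
rewrite (_ : Ex _ _ = Ex ([set b] :|: B :\ b) (fun f => 1 * 1)); last first.
  by apply: eq_Ex => f; rewrite mulr1.
rewrite H //; last by rewrite disjoints1 setD11.
rewrite (IH (B :\ b)); last by move: HB; rewrite (cardsD1 b B) Hb add1n ltnS.
by rewrite Ex_set1 !mulr1 addrC subrK.
Qed.

Lemma Ex_const B c : Ex B (fun _ => c) = c.
Proof.
rewrite -[RHS]mul1r -(Ex_one B) /Ex mulr_suml.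
by apply: eq_bigr => f _; rewrite mulr1.
Qed.

Lemma local_sub B B' h : B \subset B' -> local B h -> local B' h.
Proof.
move=> HB l f; rewrite l [RHS]l -setIA; congr (h (_ :&: _)).
by apply/esym/setIidPr.
Qed.

Lemma Ex_marg B B' h : B \subset B' -> local B h -> Ex B' h = Ex B h.
Proof.
move=> HB l.
have EB : B' = B :|: B' :\: B.
  apply/setP => x; rewrite !inE; case Hx: (x \in B); rewrite ?orbF ?orbT //=.
  by rewrite (subsetP HB x Hx).
have H := @Ex_indep B (B' :\: B) h (fun _ => 1).
rewrite EB (_ : Ex _ h = Ex (B :|: B' :\: B) (fun f => h f * 1)).
  rewrite H //; first by rewrite Ex_one mulr1.
  by apply/disjI => x H1; rewrite inE H1.
by apply: eq_Ex => f; rewrite mulr1.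
Qed.

Lemma Ex_compl B h : Ex B (fun f => 1 - h f) = 1 - Ex B h.
Proof. by rewrite Ex_sub Ex_one. Qed.

End Prob.


Definition pbool (P : Prop) : bool :=
  if excluded_middle_informative P then true else false.
Lemma pboolP (P : Prop) : reflect P (pbool P).
Proof. by rewrite /pbool; case: excluded_middle_informative => H; constructor. Qed.

Section Paths.
Variables (T : finType) (e : rel T).

Lemma path_mem_connect x q y : path e x q -> y \in x :: q ->
  connect e x y /\ connect e y (last x q).
Proof.
elim: q x y => [|z q IH] x y /=.
  by move=> _; rewrite inE => /eqP ->; split; exact: connect0.
move=> /andP[exz pz]; rewrite inE => /orP[/eqP ->|Hy].
  split; first exact: connect0.
  apply: connect_trans (connect1 exz) _; by case: (IH z z pz (mem_head z q)).
have [H1 H2] := IH z y pz Hy; split=> //; exact: connect_trans (connect1 exz) H1.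
Qed.

Lemma path_comparable x q a b : path e x q -> a \in x :: q -> b \in x :: q ->
  connect e a b || connect e b a.
Proof.
elim: q x => [|z q IH] x /=.
  by move=> _; rewrite !inE => /eqP -> /eqP ->; rewrite connect0.
move=> Hp; have /andP[exz pz] := Hp; move=> Ha0 Hb0; move: Ha0 Hb0.
rewrite in_cons => /orP[/eqP Ea|Ha]; rewrite in_cons => /orP[/eqP Eb|Hb].
- by rewrite Ea Eb connect0.
- have Hb0 : b \in x :: z :: q by rewrite in_cons Hb orbT.
  by rewrite Ea (path_mem_connect (x:=x) (q:=z :: q) Hp Hb0).1.
- have Ha0 : a \in x :: z :: q by rewrite in_cons Ha orbT.
  by rewrite Eb (path_mem_connect (x:=x) (q:=z :: q) Hp Ha0).1 orbT.
- exact: IH pz Ha Hb.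
Qed.

Lemma connect_restrict (e2 : rel T) a :
  (forall x y, connect e a x -> e x y -> e2 x y) ->
  forall u, connect e a u -> connect e2 a u.
Proof.
move=> H u /connectP [q Hq ->].
elim/last_ind: q Hq => [|q y IH] Hq /=; first exact: connect0.
move: Hq; rewrite rcons_path => /andP[Hq Hl]; rewrite last_rcons.
apply: connect_trans (IH Hq) (connect1 _); apply: H Hl.
by apply/connectP; exists q.
Qed.

End Paths.

Lemma path_notin (T : finType) (E : rel T) (K : {set T}) x q y :
  path (fun a b => (a \notin K) && E a b) x q -> y \in x :: q -> y != last x q -> y \notin K.
Proof.
elim: q x => [|z q IH] x /=; first by rewrite inE => _ /eqP -> /eqP.
move=> /andP[/andP[xK _] pz]; rewrite inE => /orP[/eqP -> //|Hy] Hne.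
exact: IH pz Hy Hne.
Qed.

Section Graph.
Variables (V : finType) (E : rel V) (r : V).
Hypothesis Hacyc : forall x y, E x y -> ~~ connect E y x.
Hypothesis Hroot : forall u, connect E r u.

Lemma acyc x y : connect E x y -> connect E y x -> x = y.
Proof.
move=> /connectP [[|z q] Hq ->] //= Hyx.
move: Hq => /= /andP[Exz pz].
have Hzy := (path_mem_connect pz (mem_head z q)).2.
by move: (Hacyc Exz); rewrite (connect_trans Hzy Hyx).
Qed.

Lemma edge_prec x y : E x y -> prec E y x.
Proof.
move=> Exy; rewrite /prec connect1 // andbT.
apply/eqP => Eyx; move: (Hacyc Exy); by rewrite Eyx connect0.
Qed.

Lemma prec_trans x y z : prec E x y -> prec E y z -> prec E x z.
Proof.
move=> /andP[nxy cyx] /andP[nyz czy]; rewrite /prec (connect_trans czy cyx) andbT.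
apply/eqP => Exz; subst z.
by move: nxy; rewrite (acyc cyx czy) eqxx.
Qed.

Lemma prec_irr x : prec E x x = false.
Proof. by rewrite /prec eqxx. Qed.

Definition rank (u : V) := #|[set x | prec E x u]|.

Lemma rank_lt x u : prec E x u -> rank x < rank u.
Proof.
move=> Hxu; apply: proper_card; rewrite properE; apply/andP; split.
  apply/subsetP => y; rewrite !inE => Hyx; exact: prec_trans Hyx Hxu.
apply/subsetPn; exists x; rewrite !inE ?Hxu //.
by rewrite prec_irr.
Qed.

Lemma rank_max u : rank u < #|V|.
Proof.
rewrite -cardsT; apply: proper_card; rewrite properE subsetT /=.
by apply/subsetPn; exists u; rewrite !inE ?prec_irr.
Qed.

Lemma root_top u : connect E u r -> u = r.
Proof. by move=> H; apply: acyc H (Hroot u). Qed.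

Lemma idom_exists u : u != r -> exists d, is_idom E r u d.
Proof.
move=> Hur.
have Hr : pbool (dominates E r r u).
  apply/pboolP; split; first by rewrite /prec Hur Hroot.
  by move=> q _ _; exact: mem_head.
case: (@arg_minnP _ r (fun d => pbool (dominates E r d u)) rank Hr) => d /pboolP Hd Hmin.
exists d; split=> //; split=> // d' Hd'.
have [q Hq Hl] := connectP (Hroot u).
have Hdq : d \in r :: q by apply: Hd.2.
have Hd'q : d' \in r :: q by apply: Hd'.2.
case/orP: (path_comparable Hq Hdq Hd'q) => H; last by [].
case: (eqVneq d d') => [->|Hne]; first exact: connect0.
have : prec E d' d by rewrite /prec eq_sym Hne H.
move/rank_lt; rewrite ltnNge (Hmin d') //.
exact/pboolP.
Qed.

Lemma idom_uniq u d1 d2 : is_idom E r u d1 -> is_idom E r u d2 -> d1 = d2.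
Proof.
move=> [_ [H1 M1]] [_ [H2 M2]]; apply: acyc; [exact: M2 H1 | exact: M1 H2].
Qed.

Lemma dom_prec w u : dominates E r w u -> prec E u w.
Proof. by case. Qed.

Lemma dom_trans w d z : dominates E r w d -> dominates E r d z -> dominates E r w z.
Proof.
move=> [Pdw Hw] [Pzd Hd]; split; first exact: prec_trans Pzd Pdw.
move=> q Hq Hl; move: (Hd q Hq Hl); rewrite inE => /orP[/eqP Edr|Hdq].
  subst d; move: Pdw => /andP[nrw cwr]; by move: nrw; rewrite (root_top cwr) eqxx.
case/splitPr: Hdq Hq Hl => q1 q2 Hq Hl.
move: Hq; rewrite cat_path => /andP[Hq1 /= /andP[Ed _]].
have Hp : path E r (rcons q1 d) by rewrite rcons_path Hq1 Ed.
move: (Hw _ Hp (last_rcons _ _ _)).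
move=> H; rewrite -cat_cons mem_cat; move: H.
rewrite -cats1 -cat_cons mem_cat mem_seq1.
by case/orP => [->//|/eqP ->]; rewrite mem_head orbT.
Qed.

Lemma dom_parent d u y : dominates E r d u -> E y u -> forall q, path E r q -> last r q = y ->
  d \in r :: q.
Proof.
move=> [Pud Hd] Eyu q Hq Hl.
have Hp : path E r (rcons q u) by rewrite rcons_path Hq Hl Eyu.
move: (Hd _ Hp (last_rcons _ _ _)); rewrite -cats1 -cat_cons mem_cat mem_seq1.
case/orP => // /eqP Edu; by rewrite Edu prec_irr in Pud.
Qed.

Lemma dom_parent_c d u y : dominates E r d u -> E y u -> connect E d y.
Proof.
move=> Hd Eyu; have [q Hq Hl] := connectP (Hroot y).
have := path_mem_connect Hq (dom_parent Hd Eyu Hq (esym Hl)).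
by rewrite -Hl; case.
Qed.

End Graph.


Section Graph2.
Variables (V : finType) (E : rel V) (r : V).
Hypothesis Hacyc : forall x y, E x y -> ~~ connect E y x.
Hypothesis Hroot : forall u, connect E r u.

Lemma domreach_step (K : {set V}) w y z :
  (forall x, x \in K <-> calI E r w x) ->
  (y = w \/ dominates E r w y) -> E y z -> z \notin K ->
  z = w \/ dominates E r w z.
Proof.
move=> HK Hy Eyz HzK.
case: (eqVneq z w) => [->|Hzw]; [by left|right].
have Hyw : connect E w y.
  by case: Hy => [->|Hd]; [exact: connect0 | case/andP: (dom_prec Hd)].
have Hwz : connect E w z := connect_trans Hyw (connect1 Eyz).
have Hzr : z != r.
  apply/eqP => Ezr; move/eqP: Hzw; apply; rewrite Ezr; apply/esym.
  by apply: (root_top Hacyc Hroot); rewrite -Ezr.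
have [d Hd] := idom_exists Hacyc Hroot Hzr.
have [q Hq Hl] := connectP (Hroot y).
have Hdq : d \in r :: q := dom_parent Hd.2.1 Eyz Hq (esym Hl).
have Hwq : w \in r :: q.
  case: Hy => [Eyw|Hdw]; last exact: Hdw.2 q Hq (esym Hl).
  by rewrite -Eyw Hl; exact: mem_last.
case: (eqVneq d w) => [Edw|Hne]; first by rewrite -Edw; exact: Hd.2.1.
case/orP: (path_comparable Hq Hdq Hwq) => Hc.
  exfalso; move/negP: HzK; apply; apply/HK; exists d; split=> //; split.
    by rewrite /prec Hzw Hwz.
  by rewrite /prec eq_sym Hne Hc.
apply: (dom_trans Hacyc Hroot) _ Hd.2.1; split; first by rewrite /prec Hne Hc.
move=> q' Hq' Hl'.
have [q'' Hq'' Hl''] := connectP (dom_parent_c Hroot Hd.2.1 Eyz).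
have Hp : path E r (q' ++ q'') by rewrite cat_path Hq' Hl' Hq''.
have Hlast : last r (q' ++ q'') = y by rewrite last_cat Hl' -Hl''.
have Hwin : w \in r :: (q' ++ q'').
  case: Hy => [Eyw|Hdw]; last exact: Hdw.2 _ Hp Hlast.
  rewrite -Eyw -Hlast; exact: mem_last.
move: Hwin; rewrite -cat_cons mem_cat => /orP[//|Hwq''].
have Hw2 : w \in d :: q'' by rewrite in_cons Hwq'' orbT.
have := (path_mem_connect Hq'' Hw2).1 => Hdw.
by move: Hne; rewrite (acyc Hacyc Hdw Hc) eqxx.
Qed.

Lemma domreach (K : {set V}) w :
  (forall x, x \in K <-> calI E r w x) ->
  forall b, reachI E K w b -> b \notin K -> b = w \/ dominates E r w b.
Proof.
move=> HK b /connectP [q Hq ->].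
suff H : forall q y, (y = w \/ dominates E r w y) ->
    path (fun a b => (a \notin K) && E a b) y q -> last y q \notin K ->
    last y q = w \/ dominates E r w (last y q).
  by apply: H Hq; left.
elim=> [|z q' IH] y Hy /=; first by move=> _ _; exact: Hy.
move=> /andP[/andP[yK Eyz] Hq'] Hl.
have HzK : z \notin K.
  case: (eqVneq z (last z q')) => [Ez|Hne']; first by rewrite {1}Ez.
  exact: path_notin Hq' (mem_head _ _) Hne'.
by apply: IH Hq' Hl; apply: domreach_step HK Hy Eyz HzK.
Qed.

Variable gamma : V -> gate.

Lemma Sfun_fuel (I C f : {set V}) : forall n m u, rank E u < n -> rank E u < m ->
  Sfun E gamma I C f n u = Sfun E gamma I C f m u.
Proof.
elim=> [|n IH] [|m] u //= Hn Hm.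
case: (u \in I) => //; case: (gamma u) => //.
  apply: eq_existsb => x; case Hux: (E u x) => //=; apply: IH.
    exact: leq_trans (rank_lt Hacyc (edge_prec Hacyc Hux)) Hn.
  exact: leq_trans (rank_lt Hacyc (edge_prec Hacyc Hux)) Hm.
apply: eq_forallb => x; case Hux: (E u x) => //=; apply: IH.
  exact: leq_trans (rank_lt Hacyc (edge_prec Hacyc Hux)) Hn.
exact: leq_trans (rank_lt Hacyc (edge_prec Hacyc Hux)) Hm.
Qed.

Lemma reachI_connect (K : {set V}) a b : reachI E K a b -> connect E a b.
Proof. by apply: connect_sub => x y /andP[_ H]; exact: connect1. Qed.

Lemma reachI_trans (K : {set V}) a b c : reachI E K a b -> reachI E K b c -> reachI E K a c.
Proof. exact: connect_trans. Qed.

Lemma reachI_step (K : {set V}) a b : a \notin K -> E a b -> reachI E K a b.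
Proof. by move=> H1 H2; apply: connect1; rewrite /= H1 H2. Qed.

Lemma Sfun_agree (J K : {set V}) C f w :
  (forall u, reachI E K w u -> (u \in J) = (u \in K)) ->
  forall n u, reachI E K w u -> Sfun E gamma J C f n u = Sfun E gamma K C f n u.
Proof.
move=> H; elim=> [|n IH] u Hu //=.
rewrite (H u Hu); case HuK: (u \in K) => //.
have Hc : forall x, E u x -> reachI E K w x.
  by move=> x Hux; apply: reachI_trans Hu (reachI_step _ Hux); rewrite HuK.
case: (gamma u) => //.
  by apply: eq_existsb => x; case Hux: (E u x) => //=; apply: IH; exact: Hc.
by apply: eq_forallb => x; case Hux: (E u x) => //=; rewrite IH //; exact: Hc.
Qed.

Lemma Sfun_local (J C f : {set V}) v : forall n u, reachI E J v u ->
  Sfun E gamma J C f n u = Sfun E gamma J C (f :&: BEset E gamma J v) n u.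
Proof.
elim=> [|n IH] u Hu //=.
case HuJ: (u \in J) => //.
have Hc : forall x, E u x -> reachI E J v x.
  by move=> x Hux; apply: reachI_trans Hu (reachI_step _ Hux); rewrite HuJ.
case Hg: (gamma u).
- by apply: eq_existsb => x; case Hux: (E u x) => //=; apply: IH; exact: Hc.
- by apply: eq_forallb => x; case Hux: (E u x) => //=; rewrite IH //; exact: Hc.
- by rewrite !inE Hu HuJ Hg /= andbT.
Qed.

Lemma Sfun_subst (J C f : {set V}) w (beta : bool) : w \in J ->
  (forall n, rank E w < n -> Sfun E gamma (J :\ w) C f n w = beta) ->
  forall n u, rank E u < n ->
  Sfun E gamma (J :\ w) C f n u =
  Sfun E gamma J (if beta then w |: C else C :\ w) f n u.
Proof.
move=> HwJ Hw; elim=> [|n IH] u Hn; first by [].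
case: (eqVneq u w) => [Euw|Huw].
  rewrite Euw (Hw n.+1) -?Euw //= Euw HwJ.
  by case: (beta); rewrite !inE eqxx.
rewrite /=.
have -> : (u \in J :\ w) = (u \in J) by rewrite !inE Huw.
case: (u \in J).
  by case: (beta); rewrite !inE ?(negbTE Huw) ?Huw.
case: (gamma u) => //.
  apply: eq_existsb => x; case Hux: (E u x) => //=; apply: IH.
  exact: leq_trans (rank_lt Hacyc (edge_prec Hacyc Hux)) Hn.
apply: eq_forallb => x; case Hux: (E u x) => //=; rewrite IH //.
exact: leq_trans (rank_lt Hacyc (edge_prec Hacyc Hux)) Hn.
Qed.

End Graph2.


Section Main.
Local Open Scope ring_scope.
Variables (R : realType) (V : finType) (E : rel V) (r : V) (gamma : V -> gate) (p : V -> R).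
Hypothesis Hacyc : forall x y, E x y -> ~~ connect E y x.
Hypothesis Hroot : forall u, connect E r u.

Lemma unrelE I u C : unrel E gamma p I u C =
  Ex p (BEset E gamma I u) (fun f => (S_T E gamma I C f u)%:R).
Proof. by []. Qed.

Lemma S_local I u C : local (BEset E gamma I u) (fun f => (S_T E gamma I C f u)%:R : R).
Proof. by move=> f; rewrite /S_T -Sfun_local //; exact: connect0. Qed.

Lemma unrel_step (J K : {set V}) v w C :
  w \in J ->
  (forall u, reachI E K w u -> (u \in J :\ w) = (u \in K)) ->
  [disjoint BEset E gamma J v & BEset E gamma K w] ->
  unrel E gamma p (J :\ w) v C =
  unrel E gamma p K w C * unrel E gamma p J v (w |: C) +
  (1 - unrel E gamma p K w C) * unrel E gamma p J v (C :\ w).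
Proof.
move=> HwJ Hag Hdis.
set B1 := BEset E gamma J v; set B2 := BEset E gamma K w.
set B' := BEset E gamma (J :\ w) v.
pose sw f := S_T E gamma K C f w.
pose s1 (f : {set V}) : R := (sw f)%:R.
pose a1 (f : {set V}) : R := (S_T E gamma J (w |: C) f v)%:R.
pose a0 (f : {set V}) : R := (S_T E gamma J (C :\ w) f v)%:R.
have Hstr : forall f, S_T E gamma (J :\ w) C f v =
    S_T E gamma J (if sw f then w |: C else C :\ w) f v.
  move=> f; apply: (Sfun_subst Hacyc) => //; last exact: rank_max E v.
  move=> n Hn; rewrite (Sfun_fuel Hacyc gamma _ _ _ Hn (rank_max E w)).
  by apply: Sfun_agree Hag _ _ _; exact: connect0.
rewrite unrelE -(@Ex_marg _ _ p B' (B' :|: (B1 :|: B2))) ?subsetUl //; last exact: S_local.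
rewrite (@eq_Ex _ _ p _ _ (fun f => a1 f * s1 f + a0 f * (1 - s1 f))); last first.
  move=> f; rewrite Hstr /s1 /a1 /a0; case: (sw f) => /=.
    by rewrite mulr1 subrr mulr0 addr0.
  by rewrite mulr0 subr0 mulr1 add0r.
have L1 : local B1 a1 by exact: S_local.
have L0 : local B1 a0 by exact: S_local.
have Ls : local B2 s1 by exact: S_local.
have Ls' : local B2 (fun f => 1 - s1 f) by move=> f /=; rewrite -Ls.
rewrite (@Ex_marg _ _ p (B1 :|: B2)) ?subsetUr //; last first.
  move=> f /=.
  rewrite (local_sub (subsetUl B1 B2) L1 f) (local_sub (subsetUl B1 B2) L0 f).
  by rewrite (local_sub (subsetUr B1 B2) Ls f).
rewrite Ex_add (Ex_indep p Hdis L1 Ls) (Ex_indep p Hdis L0 Ls') Ex_compl.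
rewrite !unrelE.
rewrite -/B1 -/B2.
have -> : Ex p B2 s1 = Ex p B2 (fun f => (S_T E gamma K C f w)%:R) by [].
ring.
Qed.

Lemma unrel_BE (I : {set V}) v C : gamma v = BE -> v \notin I ->
  (forall w, ~~ E v w) -> unrel E gamma p I v C = p v.
Proof.
move=> Hg HvI Hleaf.
have HB : BEset E gamma I v = [set v].
  apply/setP => u; rewrite !inE; apply/idP/idP.
    move=> /andP[/andP[/connectP [[|z q] Hq ->] _] _] //=.
    by move: Hq => /= /andP[/andP[_ Hvz] _]; move: (Hleaf z); rewrite Hvz.
  by move/eqP ->; rewrite /reachI connect0 HvI Hg.
rewrite unrelE HB Ex_set1 /S_T.
move: (rank_max E v); case: #|V| => [//|n] _ /=.
by rewrite (negbTE HvI) Hg !inE eqxx /= mulr1 mulr0 addr0.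
Qed.

Lemma prod_bool (P : pred V) (bb : V -> bool) :
  \prod_(i | P i) ((bb i)%:R : R) = ([forall i, P i ==> bb i])%:R.
Proof.
case: (boolP [forall i, P i ==> bb i]) => H.
  by apply: big1 => i Pi; rewrite (implyP (forallP H i) Pi).
move/forallPn: H => [i]; rewrite negb_imply => /andP[Pi nb].
by rewrite (bigD1 i) //= (negbTE nb) mul0r.
Qed.

Lemma unrel_init (J : {set V}) v C : v \notin J -> gamma v != BE ->
  (forall w, E v w -> w \in J) ->
  unrel E gamma p J v C = evalA (init_poly E gamma p v) C.
Proof.
move=> HvJ Hg HJ.
pose b0 := match gamma v with
  | OR => [exists w, E v w && (w \in C)]
  | AND => [forall w, E v w ==> (w \in C)]
  | BE => false end.
have HS : forall f, S_T E gamma J C f v = b0.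
  move=> f; rewrite /S_T; move: (rank_max E v); case: #|V| => [//|n] Hr /=.
  rewrite (negbTE HvJ).
  have Hch : forall w, E v w -> Sfun E gamma J C f n w = (w \in C).
    move=> w Hw; have := leq_trans (rank_lt Hacyc (edge_prec Hacyc Hw)) Hr.
    by case: n Hr => [|n] Hr Hlt //=; rewrite (HJ w Hw).
  rewrite /b0; case: (gamma v) Hg => // _.
    by apply: eq_existsb => w; case Hw: (E v w) => //=; exact: Hch.
  by apply: eq_forallb => w; case Hw: (E v w) => //=; exact: Hch.
rewrite unrelE (@eq_Ex _ _ p _ _ (fun _ => b0%:R)); last by move=> f; rewrite HS.
rewrite Ex_const /init_poly /b0.
have Hmorph := big_morph (fun a => evalA a C) (fun a b => evalA_mul a b C) (@evalA_one R V C).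
case: (gamma v) Hg => // _.
  rewrite evalA_sub evalA_one Hmorph.
  rewrite (eq_bigr (fun w => ((w \notin C)%:R : R))); last first.
    by move=> w _; rewrite evalA_sub evalA_one evalA_mono sub1set; case: (w \in C); rewrite ?subrr ?subr0.
  rewrite prod_bool.
  have -> : [exists w, E v w && (w \in C)] = ~~ [forall w, E v w ==> (w \notin C)].
    by rewrite negb_forall; apply: eq_existsb => w; rewrite negb_imply negbK.
  by case: [forall _, _]; rewrite ?subrr ?subr0.
rewrite Hmorph (eq_bigr (fun w => ((w \in C)%:R : R))) ?prod_bool //.
by move=> w _; rewrite evalA_mono sub1set.
Qed.

End Main.


Section Aux.
Variables (V : finType) (E : rel V) (r : V).
Hypothesis Hacyc : forall x y, E x y -> ~~ connect E y x.
Hypothesis Hroot : forall u, connect E r u.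

Lemma reachI_mono (J J' : {set V}) a b : J' \subset J -> reachI E J a b -> reachI E J' a b.
Proof.
move=> HJ; apply: connect_sub => x y /andP[Hx Hxy]; apply: connect1.
rewrite /= Hxy andbT; apply: contra Hx; exact: (subsetP HJ).
Qed.

Lemma CBE_sub0 (J J' : {set V}) v w : J' = J :\ w ->
  CBEset E J v :\ w \subset CBEset E J' v.
Proof.
move=> ->; apply/subsetP => x; rewrite !inE => /andP[Hxw /andP[Hr HxJ]].
rewrite Hxw HxJ /= andbT; apply: (reachI_mono _ Hr); exact: subsetDl.
Qed.

Lemma CBE_sub (J J' K : {set V}) v w : J' = J :\ w -> w \in CBEset E J v ->
  (forall x, reachI E K w x -> (x \in J') = (x \in K)) ->
  (CBEset E J v :\ w) :|: CBEset E K w \subset CBEset E J' v.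
Proof.
move=> EJ Hw Hag; rewrite subUset (CBE_sub0 _ EJ) /=.
apply/subsetP => x; rewrite !inE => /andP[Hx HxK].
rewrite (Hag x Hx) HxK andbT.
move: Hw; rewrite !inE => /andP[Hw _].
apply: reachI_trans (reachI_mono _ Hw) _; first by rewrite EJ subsetDl.
apply: (connect_restrict (e := fun a b => (a \notin K) && E a b)) Hx => a b Ha /andP[HaK Hab].
by rewrite /= Hab andbT (Hag a Ha).
Qed.

Lemma dom_up d x w : dominates E r d x -> connect E w x -> prec E w d ->
  dominates E r d w.
Proof.
move=> Hd Hwx Hwd; split=> // q Hq Hl.
have [q2 Hq2 Hl2] := connectP Hwx.
have Hp : path E r (q ++ q2) by rewrite cat_path Hq Hl Hq2.
have Hlast : last r (q ++ q2) = x by rewrite last_cat Hl -Hl2.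
move: (Hd.2 _ Hp Hlast); rewrite -cat_cons mem_cat => /orP[//|Hdq2].
have Hd2 : d \in w :: q2 by rewrite in_cons Hdq2 orbT.
have Hcwd := (path_mem_connect Hq2 Hd2).1.
move: Hwd => /andP[Hne Hcdw].
by move: Hne; rewrite (acyc Hacyc Hcwd Hcdw) eqxx.
Qed.

End Aux.

Lemma inA_monoY (R : realType) (V : finType) (Y : {set V}) : inA Y (mono R Y).
Proof.
rewrite inAP => Z HZ; rewrite ffunE; case: eqP => // EZ.
by rewrite EZ subxx in HZ.
Qed.

Lemma inA_init (R : realType) (V : finType) (E : rel V) gamma (p : V -> R) v :
  inA [set w | E v w] (init_poly E gamma p v).
Proof.
have Hb : forall F : V -> sfpoly R V, (forall w, E v w -> inA [set w | E v w] (F w)) ->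
    inA [set w | E v w] (\big[@Defs.mulA R V/oneA R V]_(w | E v w) F w).
  move=> F HF; apply: (big_ind (inA _)); first exact: inA_const.
    by move=> x y Hx Hy; rewrite -(setUid [set w | E v w]); exact: inA_mul.
  exact: HF.
have Hm : forall w, E v w -> inA [set w | E v w] (mono R [set w]).
  move=> w Hw; have Hs : [set w] \subset [set w | E v w] by rewrite sub1set inE.
  exact: (inA_mono Hs (@inA_monoY R V [set w])).
rewrite /init_poly; case: (gamma v).
- apply: inA_subA; first exact: inA_const.
  by apply: Hb => w Hw; apply: inA_subA; [exact: inA_const | exact: Hm].
- exact: Hb.
- exact: inA_const.
Qed.

Lemma foldl_notin (R : realType) (V : finType) (E : rel V) gamma (p : V -> R) s l g x :
  x \notin l -> foldl (SFPA_step E gamma p s) g l x = g x.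
Proof.
elim: l g => //= y l IH g; rewrite in_cons negb_or => /andP[Hxy Hxl].
by rewrite IH // /SFPA_step (negbTE Hxy).
Qed.

Lemma foldl_congr (A : Type) (V : eqType) (f1 f2 : A -> V -> A) l z :
  (forall acc x, x \in l -> f1 acc x = f2 acc x) -> foldl f1 z l = foldl f2 z l.
Proof.
elim: l z => //= x l IH z H; rewrite H ?mem_head // IH // => acc y Hy.
by apply: H; rewrite in_cons Hy orbT.
Qed.

Unset Implicit Arguments.
Set Strict Implicit.
Set Printing Implicit Defensive.
Local Open Scope ring_scope.

Theorem theorem28 (R : realType) (V : finType) (E : rel V) (r : V)
    (gamma : V -> gate) (p : V -> R)
    (HT : is_FT E r gamma p)
    (ord : seq V) (s : V -> seq V)
    (Hord : valid_outer E ord)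
    (Hs : forall v, valid_inner E r v (s v))
    (v : V) (I : {set V}) (HI : forall w, w \in I <-> calI E r v w) :
  inA (CBEset E I v) (SFPA_run E gamma p ord s v)
  /\ forall C : {set V}, C \subset CBEset E I v ->
       evalA (SFPA_run E gamma p ord s v) C = unrel E gamma p I v C.
Proof.
have [Hacyc [Hroot [Hleaf _]]] := HT.
have [Huniq [Hall Hordr]] := Hord.
pose G := SFPA_run E gamma p ord s.
have Hrun : forall u, G u = if gamma u == BE then constA V (p u)
    else foldl (fun acc w => substA acc w (G w)) (init_poly E gamma p u) (s u).
  move=> u.
  have [a [b Eord]] : exists a b, ord = a ++ u :: b.
    by case/splitPr: (Hall u) => a b; exists a, b.
  have Hu : uniq (a ++ u :: b) by rewrite -Eord.
  move: (Hu); rewrite cat_uniq => /and3P[_ Hab /andP[Hub _]].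
  pose ga := foldl (SFPA_step E gamma p s) (fun=> 0) a.
  have HG : forall x, x \notin u :: b -> G x = ga x.
    by move=> x Hx; rewrite /G /SFPA_run Eord foldl_cat foldl_notin.
  rewrite {1}/G /SFPA_run Eord foldl_cat /= foldl_notin // -/ga /SFPA_step eqxx.
  case: ifP => // _; apply: foldl_congr => acc w Hw; congr substA.
  have Hwu : prec E w u := dom_prec ((((Hs u).2.1 w).1 Hw).2.1).
  rewrite HG // in_cons negb_or; apply/andP; split.
    by apply/eqP => Ewu; rewrite Ewu prec_irr in Hwu.
  by apply/negP => /(Hordr a b u Eord w); rewrite Hwu.
have Main : forall n u (Iu : {set V}), (rank E u < n)%N ->
    (forall w, w \in Iu <-> calI E r u w) ->
    inA (CBEset E Iu u) (G u) /\ forall C, evalA (G u) C = unrel E gamma p Iu u C.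
  elim=> // n IH u Iu Hn HIu.
  have HuIu : u \notin Iu.
    by apply/negP => /HIu [d [_ [Huu _]]]; rewrite prec_irr in Huu.
  rewrite Hrun; case Hg: (gamma u == BE).
    split; first exact: inA_const.
    move=> C; rewrite evalA_const unrel_BE //; first exact/eqP.
    by move=> w; move: (Hleaf u); rewrite Hg => /esym/forallP.
  have [Hsuniq [Hsmem Hsord]] := Hs u.
  pose F := fun acc w => substA acc w (G w).
  pose Inv (J : {set V}) (acc : sfpoly R V) :=
    inA (CBEset E J u) acc /\ forall C, evalA acc C = unrel E gamma p J u C.
  suff Inner : forall l a acc, s u = a ++ l -> Inv (Iu :|: [set x in l]) acc ->
      Inv Iu (foldl F acc l).
    apply: (Inner (s u) [::]) => //.
    set J0 := Iu :|: [set x in s u].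
    have HuJ0 : u \notin J0.
      rewrite !inE negb_or HuIu /=; apply/negP => /(Hsmem u).1 [_ [[Huu _] _]].
      by rewrite prec_irr in Huu.
    have Hch : forall w, E u w -> w \in J0.
      move=> w Huw.
      have Hwr : w != r.
        by apply/eqP => Ewr; move: (Hacyc _ _ Huw); rewrite Ewr Hroot.
      have [d Hd] := idom_exists Hacyc Hroot Hwr.
      have Hdu : connect E d u := dom_parent_c Hroot Hd.2.1 Huw.
      case: (eqVneq d u) => [Edu|Hne].
        by rewrite !inE; apply/orP; right; apply/(Hsmem w).2; rewrite -Edu.
      rewrite !inE; apply/orP; left; apply/HIu; exists d; split=> //; split.
        exact: (edge_prec Hacyc Huw).
      by rewrite /prec eq_sym Hne Hdu.
    split.
      have Hsub : [set w | E u w] \subset CBEset E J0 u.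
        apply/subsetP => w; rewrite inE => Huw; rewrite inE (Hch w Huw) andbT.
        exact: reachI_step.
      exact: (inA_mono Hsub (@inA_init R V E gamma p u)).
    move=> C; rewrite (unrel_init p Hacyc) //; by rewrite Hg.
  elim=> [|w l IHl] a acc Hsl [HinA Hev] /=.
    have E0 : Iu :|: [set x in [::]] = Iu by apply/setP => x; rewrite !inE orbF.
    by rewrite E0 in HinA Hev; split.
  apply: (IHl (rcons a w)); first by rewrite Hsl cat_rcons.
  set J := Iu :|: [set x in w :: l] in HinA Hev.
  set J' := Iu :|: [set x in l].
  have Hwsu : w \in s u by rewrite Hsl mem_cat mem_head orbT.
  have Hwid : is_idom E r w u := (Hsmem w).1 Hwsu.
  have Hwu : prec E w u := dom_prec Hwid.2.1.
  have HwIu : w \notin Iu.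
    apply/negP => /HIu [d [Hd [_ Hud]]].
    by rewrite (idom_uniq Hacyc Hd Hwid) prec_irr in Hud.
  have Hu' : uniq (a ++ w :: l) by rewrite -Hsl.
  move: (Hu'); rewrite cat_uniq => /and3P[_ Hwa' /andP[Hwl _]].
  have Hbefore : forall x, x \in a -> ~~ prec E x w.
    move=> x Hx; case/splitPr: Hx Hsl => a1 a2 Hsl'.
    by apply: (Hsord a1 (a2 ++ w :: l) x); [rewrite Hsl' -catA | rewrite mem_cat mem_head orbT].
  have Hafter : forall x, x \in l -> ~~ prec E w x := Hsord a l w Hsl.
  have HwJ : w \in J by rewrite !inE eqxx orbT.
  have HJ' : J' = J :\ w.
    apply/setP => x; rewrite !inE; case: (eqVneq x w) => [->|Hxw] /=.
      by rewrite (negbTE HwIu) (negbTE Hwl).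
    by rewrite ?(negbTE Hxw).
  have [Iw HIw] : exists Iw : {set V}, forall x, x \in Iw <-> calI E r w x.
    by exists [set x | pbool (calI E r w x)] => x; rewrite inE; split => /pboolP.
  have Hrw : (rank E w < n)%N.
    exact: leq_trans (rank_lt Hacyc Hwu) Hn.
  have [IHin IHev] := IH w Iw Hrw HIw.
  have Hag : forall x, reachI E Iw w x -> (x \in J') = (x \in Iw).
    move=> x Hx; case: (eqVneq x w) => [->|Hxw].
      have -> : (w \in J') = false by rewrite !inE (negbTE HwIu) (negbTE Hwl).
      symmetry; apply/negP => /HIw [d [_ [Hww _]]].
      by rewrite prec_irr in Hww.
    have Hxw' : prec E x w by rewrite /prec Hxw (reachI_connect Hx).
    apply/idP/idP.
      move=> HxJ'; have : (x \in Iu) || (x \in l) by move: HxJ'; rewrite !inE.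
      case/orP => [/HIu [d [Hd [Hxu Hud]]] | Hxl]; apply/HIw.
        by exists d; split=> //; split=> //; exact: prec_trans Hwu Hud.
      exists u; split; last by split.
      by apply/(Hsmem x).1; rewrite Hsl mem_cat in_cons Hxl !orbT.
    move=> /HIw [d [Hd [_ Hwd]]].
    have Hdw : dominates E r d w := dom_up Hacyc Hd.2.1 (reachI_connect Hx) Hwd.
    have Hdu : connect E d u := Hwid.2.2 d Hdw.
    case: (eqVneq d u) => [Edu|Hdu'].
      have Hxs : x \in s u by apply/(Hsmem x).2; rewrite -Edu.
      move: Hxs; rewrite Hsl mem_cat in_cons => /or3P[Hxa|/eqP Exw|Hxl].
      - by move: (Hbefore x Hxa); rewrite Hxw'.
      - by move: Hxw; rewrite Exw eqxx.
      - by rewrite !inE Hxl orbT.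
    rewrite !inE; apply/orP; left; apply/HIu; exists d; split=> //; split.
      exact: prec_trans Hxw' Hwu.
    by rewrite /prec eq_sym Hdu' Hdu.
  have Hag' : forall x, reachI E Iw w x -> (x \in J :\ w) = (x \in Iw).
    by move=> x Hx; rewrite -HJ'; exact: Hag.
  have Hdis : [disjoint BEset E gamma J u & BEset E gamma Iw w].
    apply/disjI => b; rewrite !inE => /andP[/andP[Hrb HbJ] _] /andP[/andP[Hrb' HbIw] _].
    case: (domreach Hacyc Hroot HIw Hrb' HbIw) => [Ebw | Hdb].
      by move: HbJ; rewrite Ebw eqxx !orbT.
    have [q0 Hq0 Hl0] := connectP (Hroot u).
    have [qb Hqb Hlb] := connectP Hrb.
    have HqbE : path E u qb by apply: sub_path Hqb => x y /andP[].
    have Hp : path E r (q0 ++ qb) by rewrite cat_path Hq0 -Hl0 HqbE.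
    have Hlast : last r (q0 ++ qb) = b by rewrite last_cat -Hl0 -Hlb.
    move: (Hdb.2 _ Hp Hlast); rewrite -cat_cons mem_cat => /orP[Hw0|Hwb].
      have Hcwu := (path_mem_connect Hq0 Hw0).2; rewrite -Hl0 in Hcwu.
      move: Hwu => /andP[Hne Hcuw].
      by move: Hne; rewrite (acyc Hacyc Hcwu Hcuw) eqxx.
    have Hwb' : w \in u :: qb by rewrite in_cons Hwb orbT.
    have Hbw : w != last u qb.
      by rewrite -Hlb; move: (dom_prec Hdb) => /andP[Hne _]; rewrite eq_sym.
    by move: (path_notin Hqb Hwb' Hbw); rewrite HwJ.
  split.
    case HwX: (w \in CBEset E J u).
      have H1 := inA_subst (x := w) HinA IHin.
      exact: (inA_mono (CBE_sub HJ' HwX Hag) H1).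
    have H1 := inA_subst0 (x := w) (b := G w) HinA (negbT HwX).
    exact: (inA_mono (CBE_sub0 E u HJ') H1).
  move=> C; rewrite /F evalA_subst IHev !Hev HJ' (unrel_step p Hacyc C HwJ Hag' Hdis).
  ring.
have [H1 H2] := Main #|V| v I (rank_max E v) HI.
by split=> // C _; exact: H2.
Qed.
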